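(* Let $\mathcal{F}$ be a class of real functions on $\mathcal{X}$ and $(\mathbf{X}_i,Y_i)_{i=1}^n$ a sample. Let $\widehat g_1,\dots,\widehat g_d$ be $\Delta_1$-empirical risk minimizers in $\mathcal{F}$, and let $\widehat f$ be a $\Delta_2$-empirical risk minimizer in $Star_d(\mathcal{F},\widehat g_1,\dots,\widehat g_d)$. Then for any $h\in\mathcal{F}$, with $c=\frac1{36}$, $$\widehat{\mathbb{E}}(h-Y)^2-\widehat{\mathbb{E}}(\widehat f-Y)^2\ge c\,\widehat{\mathbb{E}}(\widehat f-h)^2-2(1+c)[\Delta_1+\Delta_2].$$
   Context: $\widehat{\mathbb{E}}(f)=\frac1n\sum_{i=1}^n f(\mathbf{X}_i)$ (and $\widehat{\mathbb{E}}(f-Y)^2=\frac1n\sum_i(f(\mathbf{X}_i)-Y_i)^2$). $\widehat g\in\mathcal{G}$ is a $\Delta$-empirical risk minimizer in $\mathcal{G}$ if $\widehat{\mathbb{E}}(\widehat g-Y)^2\le\min_{f\in\mathcal{G}}\widehat{\mathbb{E}}(f-Y)^2+\Delta$. $Star_d(\mathcal{F},\widehat g_1,\dots,\widehat g_d)=\{\sum_{i=1}^d\lambda_i\widehat g_i+(1-\sum_i\lambda_i)f:\lambda_i\in[0,1],\ 1-\sum_i\lambda_i\in[0,1],\ f\in\mathcal{F}\}$. *)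

(* Defs.v *)
From mathcomp Require Import all_boot all_order all_algebra.
Set Implicit Arguments. Unset Strict Implicit. Unset Printing Implicit Defensive.
Import Order.TTheory GRing.Theory Num.Theory.
Local Open Scope ring_scope.

Definition emp_mean (R : realFieldType) (X : Type) (n : nat)
  (Xs : 'I_n -> X) (f : X -> R) : R :=
  n%:R^-1 * \sum_(i < n) f (Xs i).

Definition emp_risk (R : realFieldType) (X : Type) (n : nat)
  (Xs : 'I_n -> X) (Ys : 'I_n -> R) (f : X -> R) : R :=
  n%:R^-1 * \sum_(i < n) (f (Xs i) - Ys i) ^+ 2.

Definition emp_dist (R : realFieldType) (X : Type) (n : nat)
  (Xs : 'I_n -> X) (f h : X -> R) : R :=
  emp_mean Xs (fun x => (f x - h x) ^+ 2).

Definition is_ERM (R : realFieldType) (X : Type) (n : nat)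
  (Xs : 'I_n -> X) (Ys : 'I_n -> R) (G : (X -> R) -> Prop) (Delta : R)
  (g : X -> R) : Prop :=
  G g /\ forall f, G f -> emp_risk Xs Ys g <= emp_risk Xs Ys f + Delta.

Definition Star (R : realFieldType) (X : Type) (d : nat)
  (F : (X -> R) -> Prop) (g : 'I_d -> X -> R) : (X -> R) -> Prop :=
  fun u => exists (lam : 'I_d -> R) (f : X -> R),
    (forall i, 0 <= lam i <= 1) /\
    0 <= 1 - \sum_(i < d) lam i <= 1 /\
    F f /\
    u = (fun x => \sum_(i < d) lam i * g i x + (1 - \sum_(i < d) lam i) * f x).

(* Main.v *)
Require Import Defs.
From mathcomp Require Import all_boot all_order all_algebra.
From mathcomp Require Import ring lra.
Import Order.TTheory GRing.Theory Num.Theory.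
Local Open Scope ring_scope.

Lemma quad (R : realFieldType) (n : nat) (p A B C : 'I_n -> R) (al be ga : R) :
  (forall i, p i = al * A i + be * B i + ga * C i) ->
  n%:R^-1 * \sum_(i < n) p i ^+ 2 =
  al^+2 * (n%:R^-1 * \sum_(i < n) A i * A i) +
  be^+2 * (n%:R^-1 * \sum_(i < n) B i * B i) +
  ga^+2 * (n%:R^-1 * \sum_(i < n) C i * C i) +
  2 * al * be * (n%:R^-1 * \sum_(i < n) A i * B i) +
  2 * al * ga * (n%:R^-1 * \sum_(i < n) A i * C i) +
  2 * be * ga * (n%:R^-1 * \sum_(i < n) B i * C i).
Proof.
move=> Hp.
have -> : \sum_(i < n) p i ^+ 2 = \sum_(i < n)
  (al^+2 * (A i * A i) + be^+2 * (B i * B i) + ga^+2 * (C i * C i)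
   + 2 * al * be * (A i * B i) + 2 * al * ga * (A i * C i) + 2 * be * ga * (B i * C i)).
  by apply: eq_bigr => i _; rewrite Hp; ring.
rewrite !big_split /= -!mulr_sumr; ring.
Qed.

Lemma sum_e (R : realFieldType) (d : nat) (i0 : 'I_d) (t : R) (G : 'I_d -> R) :
  \sum_(i < d) (if i == i0 then t else 0) * G i = t * G i0.
Proof.
rewrite (bigD1 i0) //= eqxx big1 ?addr0 // => j /negbTE ->; by rewrite mul0r.
Qed.

Theorem lemma2 (R : realFieldType) (X : Type) (F : (X -> R) -> Prop)
  (n : nat) (Xs : 'I_n -> X) (Ys : 'I_n -> R)
  (d : nat) (Hd : (0 < d)%N) (g : 'I_d -> X -> R) (Delta1 Delta2 : R)
  (hg : forall i, is_ERM Xs Ys F Delta1 (g i))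
  (fhat : X -> R) (hf : is_ERM Xs Ys (Star F g) Delta2 fhat)
  (h : X -> R) (hh : F h) :
  let c : R := 36%:R^-1 in
  emp_risk Xs Ys h - emp_risk Xs Ys fhat >=
    c * emp_dist Xs fhat h - 2%:R * (1 + c) * (Delta1 + Delta2).
Proof.
cbv zeta.
pose i0 : 'I_d := Ordinal Hd.
have [Fa Ea] := hg i0.
have [Sf Ef] := hf.
have D1 : 0 <= Delta1 by have := Ea _ Fa; lra.
have D2 : 0 <= Delta2 by have := Ef _ Sf; lra.
pose A i := g i0 (Xs i) - Ys i.
pose B i := h (Xs i) - Ys i.
pose C i := fhat (Xs i) - Ys i.
pose saa := n%:R^-1 * \sum_(i < n) A i * A i.
pose sbb := n%:R^-1 * \sum_(i < n) B i * B i.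
pose scc := n%:R^-1 * \sum_(i < n) C i * C i.
pose sab := n%:R^-1 * \sum_(i < n) A i * B i.
pose sac := n%:R^-1 * \sum_(i < n) A i * C i.
pose sbc := n%:R^-1 * \sum_(i < n) B i * C i.
have Ra : emp_risk Xs Ys (g i0) = saa.
  rewrite /emp_risk (@quad _ _ _ A B C 1 0 0); last by move=> i; rewrite /A; ring.
  rewrite -/saa -/sbb -/scc -/sab -/sac -/sbc; ring.
have Rb : emp_risk Xs Ys h = sbb.
  rewrite /emp_risk (@quad _ _ _ A B C 0 1 0); last by move=> i; rewrite /B; ring.
  rewrite -/saa -/sbb -/scc -/sab -/sac -/sbc; ring.
have Rc : emp_risk Xs Ys fhat = scc.
  rewrite /emp_risk (@quad _ _ _ A B C 0 0 1); last by move=> i; rewrite /C; ring.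
  rewrite -/saa -/sbb -/scc -/sab -/sac -/sbc; ring.
have E1 := Ea _ hh.
rewrite Ra Rb in E1.
have se : forall t : R, \sum_(i < d) (if i == i0 then t else 0) = t.
  move=> t; rewrite -[RHS]mulr1 -(@sum_e _ _ i0 t (fun _ => 1)).
  by apply: eq_bigr => i _; rewrite mulr1.
(* midpoint of a and h *)
pose lamh (i : 'I_d) : R := if i == i0 then 2^-1 else 0.
have Su : Star F g (fun x => \sum_(i < d) lamh i * g i x + (1 - \sum_(i < d) lamh i) * h x).
  exists lamh, h; split; [|split; [|split=> //]].
  - by move=> i; rewrite /lamh; case: (i == i0); lra.
  - rewrite /lamh se; lra.
have E2 := Ef _ Su.
rewrite Rc in E2.
have Ru : emp_risk Xs Ys (fun x => \sum_(i < d) lamh i * g i x + (1 - \sum_(i < d) lamh i) * h x)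
   = 2^-1^+2 * saa + 2^-1^+2 * sbb + 2 * 2^-1 * 2^-1 * sab.
  rewrite /emp_risk (@quad _ _ _ A B C 2^-1 2^-1 0); last first.
    move=> i /=; rewrite /lamh sum_e se /A /B; by field.
  rewrite -/saa -/sbb -/scc -/sab -/sac -/sbc; ring.
rewrite Ru in E2.
(* midpoint of a and fhat *)
have [lam [f [Hl [Hs [Ff Hfh]]]]] := Sf.
pose lam2 (i : 'I_d) : R := 2^-1 * lam i + (if i == i0 then 2^-1 else 0).
have Hsum2 : \sum_(i < d) lam2 i = 2^-1 * \sum_(i < d) lam i + 2^-1.
  by rewrite big_split /= -mulr_sumr se.
have Sv : Star F g (fun x => \sum_(i < d) lam2 i * g i x + (1 - \sum_(i < d) lam2 i) * f x).
  exists lam2, f; split; [|split; [|split=> //]].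
  - move=> i; have := Hl i; rewrite /lam2; case: (i == i0); lra.
  - rewrite Hsum2; lra.
have E3 := Ef _ Sv.
rewrite Rc in E3.
have Rv : emp_risk Xs Ys (fun x => \sum_(i < d) lam2 i * g i x + (1 - \sum_(i < d) lam2 i) * f x)
   = 2^-1^+2 * saa + 2^-1^+2 * scc + 2 * 2^-1 * 2^-1 * sac.
  rewrite /emp_risk (@quad _ _ _ A B C 2^-1 0 2^-1); last first.
    move=> i; rewrite Hsum2 /A /C Hfh.
    have -> : \sum_(i1 < d) lam2 i1 * g i1 (Xs i) =
       2^-1 * \sum_(i1 < d) lam i1 * g i1 (Xs i) + 2^-1 * g i0 (Xs i).
      rewrite -(@sum_e _ _ i0 (2^-1) (fun j => g j (Xs i))) mulr_sumr -big_split /=; apply: eq_bigr => j _; by rewrite /lam2 mulrDl mulrA.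
    by field.
  rewrite -/saa -/sbb -/scc -/sab -/sac -/sbc; ring.
rewrite Rv in E3.
have E4 : 0 <= n%:R^-1 * \sum_(i < n) (C i - 2 * A i + B i) ^+ 2.
  apply: mulr_ge0; first by rewrite invr_ge0 ler0n.
  by apply: sumr_ge0 => i _; apply: sqr_ge0.
rewrite (@quad _ _ _ A B C (-2) 1 1) in E4; last by move=> i; ring.
rewrite -/saa -/sbb -/scc -/sab -/sac -/sbc in E4.
have Rd : emp_dist Xs fhat h = sbb + scc - 2 * sbc.
  rewrite /emp_dist /emp_mean (@quad _ _ _ A B C 0 (-1) 1); last by move=> i; rewrite /B /C; ring.
  rewrite -/saa -/sbb -/scc -/sab -/sac -/sbc; ring.
have E5 : 0 <= emp_dist Xs fhat h.
  apply: mulr_ge0; first by rewrite invr_ge0 ler0n.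
  by apply: sumr_ge0 => i _; apply: sqr_ge0.
rewrite Rd in E5.
rewrite Rb Rc Rd.
move: E5.
move: E1 E2 E3 E4.
clear Rd Ra Rb Rc Ru Rv; move: saa sbb scc sab sac sbc => saa sbb scc sab sac sbc.
move=> E1 E2 E3 E4 E5; lra.
Qed.
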